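(* Let $N\ge1$ be an integer, $d>0$, $T>0$, and $0\le s_1\le\dots\le s_N$. Let $x^*$ be the optimal solution of the (assumed feasible) problem $$\min_{x\in\mathbb{R}^{N+1}}\ \sum_{i=1}^{N+1}x_i^2$$ subject to - $\sum_{i=1}^k x_i\ge s_k+kd$ for $1\le k\le N$, - $x_i\ge 2d$ for $2\le i\le N$, - $x_{N+1}\ge d$, - $\sum_{i=1}^{N+1}x_i=T+Nd$. Then for every $2\le i\le N-1$ we have $x_i^*\ge x_{i+1}^*$. Moreover, for such $i$, $x_i^*>x_{i+1}^*$ only if $\sum_{j=1}^i x_j^*=s_i+id$.
   Context: The problem arises from age-of-information minimization for a single energy harvesting transmitter with energy arrival times $s_k$, fixed service time $d$, and session length $T$. Its objective is strictly convex, so the optimal solution is unique. *)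

(* Defs.v *)
(* over an abstract R : realType. Vectors x in R^(N+1) are
   represented as x : nat -> R, using only the entries x 1, ..., x (N+1). *)
From HB Require Import structures.
From mathcomp Require Import all_boot all_order all_algebra.
From mathcomp Require Import reals.
Set Implicit Arguments. Unset Strict Implicit. Unset Printing Implicit Defensive.
Import Order.TTheory GRing.Theory Num.Theory.
Local Open Scope ring_scope.

Section AoI.
Variable R : realType.

Definition aoi_obj (N : nat) (x : nat -> R) : R :=
  \sum_(1 <= i < N.+2) x i ^+ 2.

Definition aoi_feasible (N : nat) (d T : R) (s : nat -> R) (x : nat -> R) : Prop :=
  [/\ (forall k : nat, (1 <= k <= N)%N ->
         s k + k%:R * d <= \sum_(1 <= i < k.+1) x i),
      (forall i : nat, (2 <= i <= N)%N -> 2%:R * d <= x i),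
      d <= x N.+1
    & \sum_(1 <= i < N.+2) x i = T + N%:R * d].

Definition aoi_optimal (N : nat) (d T : R) (s : nat -> R) (x : nat -> R) : Prop :=
  aoi_feasible N d T s x /\
  forall y : nat -> R, aoi_feasible N d T s y -> aoi_obj N x <= aoi_obj N y.

End AoI.

(* Main.v *)
Require Import Defs.
From HB Require Import structures.
From mathcomp Require Import all_boot all_order all_algebra.
From mathcomp Require Import reals.
From mathcomp Require Import zify ring lra.
Import Order.TTheory GRing.Theory Num.Theory.
Local Open Scope ring_scope.

Lemma ind_sum (R : realType) (c : R) (i n : nat) :
  \sum_(1 <= j < n) ((j == i)%:R * c) = if (1 <= i < n)%N then c else 0.
Proof.
elim: n => [|n IH]; first by rewrite big_geq //; have -> : (1 <= i < 0)%N = false by lia.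
case: n IH => [|n] IH.
  by rewrite big_geq //; have -> : (1 <= i < 1)%N = false by lia.
rewrite big_nat_recr // IH.
case: (eqVneq n.+1 i) => [<-|ne] /=.
  by case: ifP => ?; case: ifP => ?; rewrite ?mul1r ?add0r //; exfalso; lia.
by case: ifP => ?; case: ifP => ?; rewrite ?mul0r ?addr0 //; exfalso; lia.
Qed.

Definition shift (R : realType) (x : nat -> R) (i : nat) (e : R) : nat -> R :=
  fun j => x j + (j == i)%:R * e - (j == i.+1)%:R * e.
Arguments shift {R}.

Lemma shift_sum (R : realType) (x : nat -> R) (i : nat) (e : R) (n : nat) :
  \sum_(1 <= j < n) shift x i e j = \sum_(1 <= j < n) x j
     + (if (1 <= i < n)%N then e else 0) - (if (1 <= i.+1 < n)%N then e else (0:R)).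
Proof.
rewrite /shift big_split /= big_split /= sumrN !ind_sum.
by [].
Qed.

Lemma shift_obj (R : realType) (N : nat) (x : nat -> R) (i : nat) (e : R) : (1 <= i)%N -> (i.+1 < N.+2)%N ->
  aoi_obj N (shift x i e) = aoi_obj N x + 2 * e * (x i - x i.+1) + 2 * e ^+ 2.
Proof.
move=> h1 h2.
rewrite /aoi_obj.
have -> : \sum_(1 <= j < N.+2) shift x i e j ^+ 2 =
   \sum_(1 <= j < N.+2) (x j ^+ 2 + (j == i)%:R * (2 * e * x i + e ^+ 2)
      - (j == i.+1)%:R * (2 * e * x i.+1 - e ^+ 2)).
  apply: eq_bigr => j _; rewrite /shift.
  case: (eqVneq j i) => [->|ne].
    have -> : (i == i.+1) = false by lia.
    rewrite /= ?mulr1n ?mulr0n; ring.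
  case: (eqVneq j i.+1) => [->|ne2]; rewrite /= ?mulr1n ?mulr0n; ring.
rewrite big_split /= big_split /= sumrN !ind_sum.
have -> : (1 <= i < N.+2)%N by lia.
have -> : (1 <= i.+1 < N.+2)%N by lia.
ring.
Qed.

Lemma shift_feas (R : realType) (N : nat) (d T : R) (s x : nat -> R) (i : nat) (e : R) :
  aoi_feasible N d T s x -> (2 <= i)%N -> (i.+1 <= N)%N ->
  2%:R * d <= x i + e -> 2%:R * d <= x i.+1 - e ->
  s i + i%:R * d <= \sum_(1 <= j < i.+1) x j + e ->
  aoi_feasible N d T s (shift x i e).
Proof.
case=> h1 h2 h3 h4 hi hN b1 b2 b3; split.
- move=> k hk; rewrite shift_sum.
  case: (eqVneq k i) => [->|ne].
    have -> : (1 <= i < i.+1)%N by lia.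
    have -> : (1 <= i.+1 < i.+1)%N = false by lia.
    by rewrite subr0.
  have -> : (1 <= i.+1 < k.+1)%N = (1 <= i < k.+1)%N by lia.
  by rewrite addrK; apply: h1.
- move=> j hj; rewrite /shift.
  case: (eqVneq j i) => [->|ne].
    have -> : (i == i.+1) = false by lia.
    by rewrite /= ?mulr1n ?mulr0n mul1r mul0r subr0.
  rewrite /= ?mulr0n mul0r addr0.
  case: (eqVneq j i.+1) => [->|ne2]; first by rewrite /= ?mulr1n mul1r.
  by rewrite /= ?mulr0n mul0r subr0; apply: h2.
- rewrite /shift.
  have -> : (N.+1 == i) = false by lia.
  have -> : (N.+1 == i.+1) = false by lia.
  by rewrite !mul0r addr0 subr0.
- rewrite shift_sum.
  have -> : (1 <= i < N.+2)%N by lia.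
  have -> : (1 <= i.+1 < N.+2)%N by lia.
  by rewrite addrK.
Qed.

Theorem lemma1 (R : realType) (N : nat) (d T : R) (s : nat -> R) (xs : nat -> R) :
  (1 <= N)%N -> 0 < d -> 0 < T ->
  0 <= s 1%N -> (forall k : nat, (1 <= k < N)%N -> s k <= s k.+1) ->
  aoi_optimal N d T s xs ->
  forall i : nat, (2 <= i <= N.-1)%N ->
    xs i.+1 <= xs i /\
    (xs i.+1 < xs i -> \sum_(1 <= j < i.+1) xs j = s i + i%:R * d).
Proof.
move=> hN hd hT hs0 hs [hf hopt] i hi.
have hi2 : (2 <= i)%N by lia.
have hiN : (i.+1 <= N)%N by lia.
have hi1 : (1 <= i)%N by lia.
have hi3 : (i.+1 < N.+2)%N by lia.
have hf' := hf; case: hf' => h1 h2 h3 h4.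
have xi : 2%:R * d <= xs i by apply: h2; lia.
have xi1 : 2%:R * d <= xs i.+1 by apply: h2; lia.
have pre : s i + i%:R * d <= \sum_(1 <= j < i.+1) xs j by apply: h1; lia.
split.
  rewrite leNgt; apply/negP => lt.
  pose e := (xs i.+1 - xs i) / 2.
  have := hopt _ (@shift_feas _ _ _ _ _ _ _ e hf hi2 hiN _ _ _).
  rewrite (@shift_obj _ N xs i e hi1 hi3).
  have ep : 0 < e by rewrite /e; lra.
  have : 2 * e * (xs i - xs i.+1) + 2 * e ^+ 2 < 0.
    have E : 2 * e * (xs i - xs i.+1) + 2 * e ^+ 2 = - (2 * e ^+ 2) by rewrite /e; field.
    by rewrite E oppr_lt0 mulr_gt0 // exprn_gt0.
  move=> H1 H2.
  have : aoi_obj N xs <= aoi_obj N xs + (2 * e * (xs i - xs i.+1) + 2 * e ^+ 2).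
    by rewrite addrA; apply: H2; rewrite /e; lra.
  lra.
move=> lt; apply/eqP; rewrite eq_le pre andbT; rewrite leNgt; apply/negP => gt.
pose e := Num.min ((xs i - xs i.+1) / 2) (\sum_(1 <= j < i.+1) xs j - (s i + i%:R * d)).
have ep : 0 < e by rewrite /e lt_min; apply/andP; split; lra.
have e1 : e <= (xs i - xs i.+1) / 2 by rewrite /e ge_min lexx.
have e2 : e <= \sum_(1 <= j < i.+1) xs j - (s i + i%:R * d) by rewrite /e ge_min lexx orbT.
have H2 := hopt _ (@shift_feas _ _ _ _ _ _ _ (-e) hf hi2 hiN _ _ _).
rewrite (@shift_obj _ N xs i (-e) hi1 hi3) in H2.
have : 2 * (-e) * (xs i - xs i.+1) + 2 * (-e) ^+ 2 < 0.
  have E : 2 * (-e) * (xs i - xs i.+1) + 2 * (-e) ^+ 2 = (2 * e) * (e - (xs i - xs i.+1)) by ring.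
  rewrite E pmulr_rlt0 ?mulr_gt0 //; lra.
have : aoi_obj N xs <= aoi_obj N xs + (2 * (-e) * (xs i - xs i.+1) + 2 * (-e) ^+ 2).
  by rewrite addrA; apply: H2; lra.
lra.
Qed.
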